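(* Let $R$ be a ring, $A$ an $R$-algebra, $n\in\{0,1,\dots,\infty\}$, and $M$ an $A_n$-module. Regard $M\hat\otimes_{A_n}B_n$ as an $A$-module via $\gamma_n^\sharp\colon A\to B_n$ (for finite $n$, $\hat\otimes_{A_n}=\otimes_{A_n}$). Then there is a natural isomorphism \[ \operatorname{Der}_R(A_n,M)\simeq \operatorname{Der}_R(A,M\hat\otimes_{A_n}B_n). \] If $m>n$ and $M$ is an $A_m$-module, then the natural map $\operatorname{Der}_R(A_m,M)\to\operatorname{Der}_R(A_n,M)$ corresponds under these isomorphisms to the map induced by the projection $\mu^\sharp_{m,n}\colon B_m\to B_n\otimes_{A_n}A_m$ (i.e. $A_m[t]/(t^{m+1})\to A_m[t]/(t^{n+1})$, resp. $A_\infty[[t]]\to A_\infty[t]/(t^{n+1})$).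
   Context: For an $R$-algebra $A$ and $n\in\{0,1,\dots,\infty\}$, $A_n$ denotes the $R$-algebra representing the functor $C\mapsto\operatorname{Hom}_{R\text{-alg}}(A,C[t]/(t^{n+1}))$ for finite $n$ and $C\mapsto\operatorname{Hom}_{R\text{-alg}}(A,C[[t]])$ for $n=\infty$ (so $\operatorname{Spec}A_n$ is the jet scheme/arc space of $\operatorname{Spec}A$ over $\operatorname{Spec}R$). $B_n=A_n[t]/(t^{n+1})$ for finite $n$, $B_\infty=A_\infty[[t]]$ (with $t$-adic topology), regarded as $A_n$-module via the inclusion $A_n\subset B_n$, and $\gamma_n^\sharp\colon A\to B_n$ is the universal homomorphism corresponding to the identity of $A_n$. Completed tensor product $\hat\otimes$ is the completion of the ordinary tensor product; $M\hat\otimes_{A_\infty}B_\infty=\prod_{i\ge0}Mt^i$. *)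

(* Defs.v *)
From HB Require Import structures.
From mathcomp Require Import all_boot all_order all_algebra.
Set Implicit Arguments. Unset Strict Implicit. Unset Printing Implicit Defensive.
Import GRing.Theory.
Local Open Scope ring_scope.

(* Jet orders n ∈ {0,1,...,∞}: [Some n] is the finite order n, [None] is ∞. *)
Definition jorder := option nat.

Definition inb (i : nat) (n : jorder) : bool :=
  if n is Some n' then (i <= n')%N else true.

Definition jlt (n m : jorder) : bool :=
  match n, m with
  | Some n', Some m' => (n' < m')%N
  | Some _, None => true
  | None, _ => false
  end.

Definition is_alg_hom (R : comPzRingType) (S T : comAlgType R) (f : S -> T) :=
  [/\ forall r x y, f (r *: x + y) = r *: f x + f y,
      f 1 = 1 &
      forall x y, f (x * y) = f x * f y].

(* An R-algebra homomorphism  phi : A -> C[t]/(t^(n+1))  (resp. C[[t]] for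
   n = ∞), written via its coefficients  phi a = \sum_i (phi i a) t^i
   (with phi i a = 0 for i > n). *)
Definition is_jet_hom (R : comPzRingType) (A C : comAlgType R) (n : jorder)
    (phi : nat -> A -> C) :=
  [/\ forall i a, ~~ inb i n -> phi i a = 0,
      forall i r a b, phi i (r *: a + b) = r *: phi i a + phi i b,
      forall i, phi i 1 = (i == 0%N)%:R &
      forall k a b, inb k n ->
        phi k (a * b) = \sum_(i < k.+1) phi i a * phi (k - i)%N b].

(* (An, gamma) represents C |-> Hom_R-alg(A, C[t]/(t^(n+1))) (resp. C[[t]]):
   gamma is the universal homomorphism gamma_n^# : A -> B_n. *)
Definition is_jet_algebra (R : comPzRingType) (A : comAlgType R) (n : jorder)
    (An : comAlgType R) (gamma : nat -> A -> An) :=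
  is_jet_hom n gamma /\
  forall (C : comAlgType R) (phi : nat -> A -> C), is_jet_hom n phi ->
    exists f : An -> C,
      [/\ is_alg_hom f, forall i a, f (gamma i a) = phi i a &
          forall g : An -> C, is_alg_hom g ->
            (forall i a, g (gamma i a) = phi i a) -> forall x, g x = f x].

(* R-derivations S -> M, where M is an S-module through the action [act]
   (so the R-module structure of M is r.m = act (r%:A) m). *)
Definition is_der (R : comPzRingType) (S : comAlgType R) (M : zmodType)
    (act : S -> M -> M) (D : S -> M) :=
  [/\ forall r x, D (r *: x) = act (r%:A) (D x),
      forall x y, D (x + y) = D x + D y &
      forall x y, D (x * y) = act x (D y) + act y (D x)].

(* Elements of M (^)_{An} B_n = \prod_{i <= n} M t^i are represented as
   sequences [m : nat -> M] (with m k = 0 for k > n).  The A-module structure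
   via gamma : A -> B_n, where M is an An-module through [act]: *)
Definition jact (R : comPzRingType) (A An : comAlgType R) (M : zmodType)
    (act : An -> M -> M) (n : jorder) (gamma : nat -> A -> An)
    (a : A) (m : nat -> M) : nat -> M :=
  fun k => if inb k n then \sum_(i < k.+1) act (gamma i a) (m (k - i)%N) else 0.

Definition is_derB (R : comPzRingType) (A An : comAlgType R) (M : zmodType)
    (act : An -> M -> M) (n : jorder) (gamma : nat -> A -> An)
    (E : A -> nat -> M) :=
  [/\ forall a k, ~~ inb k n -> E a k = 0,
      forall r a k, E (r *: a) k = jact act n gamma (r%:A) (E a) k,
      forall a b k, E (a + b) k = E a k + E b k &
      forall a b k, E (a * b) k =
        jact act n gamma a (E b) k + jact act n gamma b (E a) k].

Definition derPhi (R : comPzRingType) (A An : comAlgType R) (M : zmodType)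
    (n : jorder) (gamma : nat -> A -> An) (D : An -> M) : A -> nat -> M :=
  fun a k => if inb k n then D (gamma k a) else 0.

(* map induced by the projection B_m -> B_n (x) A_m: truncation above degree n *)
Definition jtrunc (M : zmodType) (n : jorder) (m : nat -> M) : nat -> M :=
  fun k => if inb k n then m k else 0.

(* Main.v *)
Require Import Defs.
From HB Require Import structures.
From mathcomp Require Import all_boot all_order all_algebra.
Import GRing.Theory.
Set Implicit Arguments. Unset Strict Implicit.
Local Open Scope ring_scope.

Section Sqz.
Variables (R : comPzRingType) (An : comAlgType R) (M : lmodType An).
Definition sqz : Type := (An * M)%type.
HB.instance Definition _ := GRing.Zmodule.on sqz.
Definition sqz_scale (r : R) (p : sqz) : sqz := (r *: p.1, r%:A *: p.2).
Lemma sqz_scalerA a b v : sqz_scale a (sqz_scale b v) = sqz_scale (a * b) v.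
Proof. by case: v => x m; rewrite /sqz_scale /= scalerA scalerA -scalerAl mul1r scalerA. Qed.
Lemma sqz_scale1r : left_id 1 sqz_scale.
Proof. by case=> x m; rewrite /sqz_scale /= scale1r scale1r scale1r. Qed.
Lemma sqz_scalerDr : right_distributive sqz_scale +%R.
Proof. by move=> r [x m] [y n]; rewrite /sqz_scale /= !scalerDr. Qed.
Lemma sqz_scalerDl v : {morph sqz_scale^~ v: a b / a + b}.
Proof. by move=> a b; case: v => x m; rewrite /sqz_scale /= !scalerDl. Qed.
HB.instance Definition _ := GRing.Zmodule_isLmodule.Build R sqz
  sqz_scalerA sqz_scale1r sqz_scalerDr sqz_scalerDl.
Definition sqz_one : sqz := (1, 0).
Definition sqz_mul (p q : sqz) : sqz := (p.1 * q.1, p.1 *: q.2 + q.1 *: p.2).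
Lemma sqz_mulA : associative sqz_mul.
Proof.
case=> x m [y n] [z o]; rewrite /sqz_mul /=; congr pair; first by rewrite mulrA.
by rewrite !scalerDr !scalerA addrA [z * y]mulrC [z * x]mulrC addrAC.
Qed.
Lemma sqz_mulC : commutative sqz_mul.
Proof. by case=> x m [y n]; rewrite /sqz_mul /= mulrC addrC. Qed.
Lemma sqz_mul1 : left_id sqz_one sqz_mul.
Proof. by case=> x m; rewrite /sqz_mul /= mul1r scale1r scaler0 addr0. Qed.
Lemma sqz_mulDl : left_distributive sqz_mul +%R.
Proof.
case=> x m [y n] [z o]; rewrite /sqz_mul /=; congr pair; first by rewrite mulrDl.
by rewrite scalerDl scalerDr addrACA.
Qed.
Lemma sqz_one0 : sqz_one != 0.
Proof. by apply/eqP => -[] /eqP; rewrite oner_eq0. Qed.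
HB.instance Definition _ := GRing.Zmodule_isComNzRing.Build sqz
  sqz_mulA sqz_mulC sqz_mul1 sqz_mulDl sqz_one0.
Lemma sqz_scalerAl (a : R) (u v : sqz) : a *: (u * v) = (a *: u) * v.
Proof.
case: u v => [x m] [y n].
change (sqz_scale a (sqz_mul (x,m) (y,n)) = sqz_mul (sqz_scale a (x,m)) (y,n)).
rewrite /sqz_mul /sqz_scale /=; congr pair; first by rewrite scalerAl.
by rewrite scalerDr !scalerA mulr_algl [y * _]mulrC mulr_algl.
Qed.
HB.instance Definition _ := GRing.Lmodule_isLalgebra.Build R sqz sqz_scalerAl.
HB.instance Definition _ := GRing.Lalgebra_isComAlgebra.Build R sqz.
End Sqz.
Arguments sqz {R An} M.

Lemma sqz_addE (R : comPzRingType) (An : comAlgType R) (M : lmodType An) (p q : sqz M) :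
  p + q = (p.1 + q.1, p.2 + q.2). Proof. by []. Qed.
Lemma sqz_mulE (R : comPzRingType) (An : comAlgType R) (M : lmodType An) (p q : sqz M) :
  p * q = (p.1 * q.1, p.1 *: q.2 + q.1 *: p.2). Proof. by []. Qed.
Lemma sqz_scaleE (R : comPzRingType) (An : comAlgType R) (M : lmodType An) r (p : sqz M) :
  r *: p = (r *: p.1, r%:A *: p.2). Proof. by []. Qed.
Lemma sqz_oneE (R : comPzRingType) (An : comAlgType R) (M : lmodType An) :
  (1 : sqz M) = (1, 0). Proof. by []. Qed.
Lemma sqz_zeroE (R : comPzRingType) (An : comAlgType R) (M : lmodType An) :
  (0 : sqz M) = (0, 0). Proof. by []. Qed.
Lemma sqz_natE (R : comPzRingType) (An : comAlgType R) (M : lmodType An) k :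
  (k%:R : sqz M) = (k%:R, 0).
Proof.
elim: k => [|k IH]; first by [].
by rewrite mulrS IH sqz_addE /= mulrS addr0.
Qed.
Lemma sqz_sumE (R : comPzRingType) (An : comAlgType R) (M : lmodType An) N (F : 'I_N -> sqz M) :
  \sum_(i < N) F i = (\sum_(i < N) (F i).1, \sum_(i < N) (F i).2).
Proof.
elim: N F => [|N IH] F; first by rewrite !big_ord0.
by rewrite !big_ord_recr IH.
Qed.

Lemma sum_rev (V : zmodType) k (F : nat -> nat -> V) :
  \sum_(i < k.+1) F i (k - i)%N = \sum_(i < k.+1) F (k - i)%N i.
Proof.
rewrite (reindex_inj rev_ord_inj) /=; apply: eq_bigr => i _.
by rewrite subSS subKn // -ltnS.
Qed.

Lemma inb_le i j n : inb i n -> (j <= i)%N -> inb j n.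
Proof. by case: n => //= n' h h'; apply: leq_trans h' h. Qed.

Lemma dbl0 (V : zmodType) (x : V) : x = x + x -> x = 0.
Proof.
move=> h; have /addrI h2 : x + 0 = x + x by rewrite addr0 {1}h.
by rewrite -h2.
Qed.

Section Facts.
Variables (R : comPzRingType).

Lemma jet0 (A C : comAlgType R) n (phi : nat -> A -> C) :
  is_jet_hom n phi -> forall i, phi i 0 = 0.
Proof.
case=> _ hl _ _ i; have := hl i 1 0 0; rewrite !scale1r !addr0 => h.
apply: dbl0; exact h.
Qed.

Lemma jetZ (A C : comAlgType R) n (phi : nat -> A -> C) :
  is_jet_hom n phi -> forall i r a, phi i (r *: a) = r *: phi i a.
Proof.
move=> H i r a; have := H; case=> _ hl _ _.
by have := hl i r a 0; rewrite !addr0 (jet0 H) addr0.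
Qed.

Lemma jetD (A C : comAlgType R) n (phi : nat -> A -> C) :
  is_jet_hom n phi -> forall i a b, phi i (a + b) = phi i a + phi i b.
Proof.
move=> H i a b; have := H; case=> _ hl _ _.
by have := hl i 1 a b; rewrite !scale1r.
Qed.

Lemma alg0 (S T : comAlgType R) (f : S -> T) : is_alg_hom f -> f 0 = 0.
Proof.
case=> hl _ _; have := hl 1 0 0; rewrite !scale1r !addr0 => h.
apply: dbl0; exact h.
Qed.

Lemma algZ (S T : comAlgType R) (f : S -> T) : is_alg_hom f ->
  forall r x, f (r *: x) = r *: f x.
Proof. move=> H r x; have := H; case=> hl _ _.
by have := hl r x 0; rewrite !addr0 (alg0 H) addr0.
Qed.

Lemma algD (S T : comAlgType R) (f : S -> T) : is_alg_hom f ->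
  forall x y, f (x + y) = f x + f y.
Proof. move=> H x y; have := H; case=> hl _ _.
by have := hl 1 x y; rewrite !scale1r.
Qed.

Lemma algM (S T : comAlgType R) (f : S -> T) : is_alg_hom f ->
  forall x y, f (x * y) = f x * f y.
Proof. by case. Qed.

Lemma alg_sum (S T : comAlgType R) (f : S -> T) : is_alg_hom f ->
  forall N (F : 'I_N -> S), f (\sum_(i < N) F i) = \sum_(i < N) f (F i).
Proof. move=> H N F; exact: (big_morph f (algD H) (alg0 H)). Qed.

Lemma alg_comp_jet (A S T : comAlgType R) n (phi : nat -> A -> S) (f : S -> T) :
  is_alg_hom f -> is_jet_hom n phi -> is_jet_hom n (fun i a => f (phi i a)).
Proof.
move=> Hf Hp; have := Hp; case=> h0 hl h1 hm; split.
- by move=> i a /h0 ->; rewrite (alg0 Hf).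
- by move=> i r a b; rewrite hl (algD Hf) (algZ Hf).
- move=> i; rewrite h1; case: (i == 0)%N => /=; first by case: Hf.
  exact: alg0 Hf.
- move=> k a b hk; rewrite hm // (alg_sum Hf); apply: eq_bigr => i _.
  exact: algM.
Qed.

Lemma der0 (S : comAlgType R) (M : lmodType S) (D : S -> M) :
  is_der (fun x (v : M) => x *: v) D -> D 0 = 0.
Proof. case=> _ hD _; have := hD 0 0; rewrite addr0 => h; apply: dbl0; exact h. Qed.

Lemma der_sum (S : comAlgType R) (M : lmodType S) (D : S -> M) :
  is_der (fun x (v : M) => x *: v) D ->
  forall N (F : 'I_N -> S), D (\sum_(i < N) F i) = \sum_(i < N) D (F i).
Proof. move=> H N F; have := H; case=> _ hD _; exact: (big_morph D hD (der0 H)). Qed.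

Lemma der1 (S : comAlgType R) (M : lmodType S) (D : S -> M) :
  is_der (fun x (v : M) => x *: v) D -> D 1 = 0.
Proof. case=> _ _ hM; have := hM 1 1; rewrite mulr1 scale1r => h; apply: dbl0; exact h. Qed.

Lemma jact_alg (A An : comAlgType R) (M : lmodType An) n (gamma : nat -> A -> An) r (m : nat -> M) k :
  is_jet_hom n gamma ->
  jact (fun x (v : M) => x *: v) n gamma (r%:A) m k = if inb k n then r%:A *: m k else 0.
Proof.
move=> H; rewrite /jact; case: ifP => // _.
rewrite big_ord_recl /= subn0 big1 ?addr0.
  by rewrite (jetZ H); have := H; case=> _ _ -> _; rewrite /=.
move=> i _; rewrite (jetZ H); have := H; case=> _ _ -> _.
by rewrite /= scaler0 scale0r.
Qed.

End Facts.

Section Main.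
Variables (R : comPzRingType) (A : comAlgType R).

Lemma inb_lt n m k : jlt n m -> inb k n -> inb k m.
Proof.
case: n => [n'|] //; case: m => [m'|] //= h hk.
by apply: leq_trans (ltnW h).
Qed.

Lemma part1a (An : comAlgType R) (M : lmodType An) n (gamma : nat -> A -> An) :
  is_jet_hom n gamma -> forall D : An -> M, is_der (fun x (v : M) => x *: v) D ->
  is_derB (fun x (v : M) => x *: v) n gamma (derPhi n gamma D).
Proof.
move=> Hg D HD; have := HD; case=> hZ hA hM; have := Hg; case=> g0 gl g1 gm.
split.
- by move=> a k; rewrite /derPhi => /negbTE ->.
- move=> r a k; rewrite jact_alg // /derPhi; case: ifP => // _.
  by rewrite (jetZ Hg) hZ.
- move=> a b k; rewrite /derPhi; case: ifP => _; last by rewrite addr0.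
  by rewrite (jetD Hg) hA.
- move=> a b k; rewrite /derPhi /jact; case: ifP => hk; last by rewrite addr0.
  rewrite gm // (der_sum HD) /=.
  have e1 : \sum_(i < k.+1) gamma i a *: (if inb (k - i) n then D (gamma (k - i)%N b) else 0)
     = \sum_(i < k.+1) gamma i a *: D (gamma (k - i)%N b).
    by apply: eq_bigr => i _; rewrite (inb_le hk) // leq_subr.
  have e2 : \sum_(i < k.+1) gamma i b *: (if inb (k - i) n then D (gamma (k - i)%N a) else 0)
     = \sum_(i < k.+1) gamma (k - i)%N b *: D (gamma i a).
    transitivity (\sum_(i < k.+1) gamma i b *: D (gamma (k - i)%N a)).
      by apply: eq_bigr => i _; rewrite (inb_le hk) // leq_subr.
    exact: (esym (@sum_rev M k (fun i j => gamma j b *: D (gamma i a)))).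

  rewrite e1 e2 -big_split /=; apply: eq_bigr => i _; by rewrite hM.
Qed.

Lemma part1b (An : comAlgType R) (M : lmodType An) n (gamma : nat -> A -> An) :
  is_jet_algebra n gamma -> forall E : A -> nat -> M,
  is_derB (fun x (v : M) => x *: v) n gamma E ->
  exists D : An -> M, is_der (fun x (v : M) => x *: v) D /\
    forall a k, derPhi n gamma D a k = E a k.
Proof.
move=> [Hg Hu] E [e0 eZ eD eM].
have := Hg; case=> g0 gl g1 gm.
have eZ' : forall r a k, E (r *: a) k = r%:A *: E a k.
  move=> r a k; rewrite eZ jact_alg //; case: ifP => // /negbT /e0 ->.
  by rewrite scaler0.
have j1 : forall (mm : nat -> M) k, jact (fun x (v : M) => x *: v) n gamma 1 mm k
    = if inb k n then mm k else 0.
  by move=> mm k; have := @jact_alg _ A An M n gamma 1 mm k Hg; rewrite !scale1r.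
have e1 : forall k, E 1 k = 0.
  move=> k; case hk: (inb k n); last by rewrite e0 ?hk.
  have := eM 1 1 k; rewrite mulr1 !j1 hk => h; apply: dbl0; exact h.
pose phi : nat -> A -> sqz M := fun i a => (gamma i a, E a i).
have Hp : is_jet_hom n phi.
  split.
  - by move=> i a hi; rewrite /phi g0 // e0.
  - by move=> i r a b; rewrite /phi sqz_addE sqz_scaleE /= gl eD eZ'.
  - by move=> i; rewrite /phi sqz_natE g1 e1.
  - move=> k a b hk; rewrite /phi sqz_sumE /= gm // eM /jact hk; congr pair.
    transitivity (\sum_(i < k.+1) (gamma i a *: E b (k - i)%N + gamma (k - i)%N b *: E a i)).
      rewrite big_split /=; congr (_ + _).
      exact: (esym (@sum_rev M k (fun i j => gamma j b *: E a i))).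
    by [].
have [f [Hf Hfg _]] := Hu (sqz M) phi Hp.
have fst_id : forall x, (f x).1 = x.
  have [f0 [_ _ Hu0]] := Hu An gamma Hg.
  have Hf1 : is_alg_hom (fun x => (f x).1).
    split.
    - by move=> r x y; rewrite (algD Hf) (algZ Hf).
    - by have := Hf; case=> _ -> _.
    - by move=> x y; rewrite (algM Hf).
  move=> x; rewrite (Hu0 _ Hf1); last by move=> i a; rewrite Hfg.
  symmetry; apply: (Hu0 id) => //; split => //.
exists (fun x => (f x).2); split.
- split.
  + by move=> r x; rewrite (algZ Hf).
  + by move=> x y; rewrite (algD Hf).
  + by move=> x y; rewrite (algM Hf) sqz_mulE /= !fst_id.
- move=> a k; rewrite /derPhi Hfg /=; case: ifP => // /negbT /e0 ->.
  by [].
Qed.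

Lemma part1c (An : comAlgType R) (M : lmodType An) n (gamma : nat -> A -> An) :
  is_jet_algebra n gamma -> forall D D' : An -> M,
  is_der (fun x (v : M) => x *: v) D -> is_der (fun x (v : M) => x *: v) D' ->
  (forall a k, derPhi n gamma D a k = derPhi n gamma D' a k) ->
  forall x, D x = D' x.
Proof.
move=> [Hg Hu] D D' HD HD' He x.
have := Hg; case=> g0 gl g1 gm.
have hom : forall D0 : An -> M, is_der (fun x (v : M) => x *: v) D0 ->
    is_alg_hom (fun x => ((x, D0 x) : sqz M)).
  move=> D0 H0; have := H0; case=> hZ hA hM; split.
  - by move=> r x' y; rewrite sqz_addE sqz_scaleE /= hA hZ.
  - by rewrite sqz_oneE (der1 H0).
  - by move=> x' y; rewrite sqz_mulE /= hM.
have eg : forall i a, D (gamma i a) = D' (gamma i a).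
  move=> i a; case hi: (inb i n); first by have := He a i; rewrite /derPhi hi.
  by rewrite (g0 i a (negbT hi)) (der0 HD) (der0 HD').
have Hp := alg_comp_jet (hom D HD) Hg.
have [f [_ _ Hfu]] := Hu _ _ Hp.
have h1 := Hfu _ (hom D HD) (fun i a => erefl) x.
have h2 := Hfu _ (hom D' HD') (fun i a => ltac:(by rewrite /= eg)) x.
by have := congr1 snd (etrans h1 (esym h2)).
Qed.

End Main.

Unset Implicit Arguments. Set Strict Implicit.

Theorem lemma5p1 (R : comPzRingType) (A : comAlgType R) :
  (forall (n : jorder) (An : comAlgType R) (gamma : nat -> A -> An),
     is_jet_algebra n gamma ->
     forall M : lmodType An,
       let act := fun (x : An) (v : M) => x *: v in
       [/\ forall D : An -> M, is_der act D -> is_derB act n gamma (derPhi n gamma D),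
           forall E : A -> nat -> M, is_derB act n gamma E ->
             exists D : An -> M, is_der act D /\
               forall a k, derPhi n gamma D a k = E a k &
           forall D D' : An -> M, is_der act D -> is_der act D' ->
             (forall a k, derPhi n gamma D a k = derPhi n gamma D' a k) ->
             forall x, D x = D' x]) /\
  (forall (n m : jorder) (An Am : comAlgType R)
          (gn : nat -> A -> An) (gm : nat -> A -> Am) (pi : An -> Am),
     is_jet_algebra n gn -> is_jet_algebra m gm -> jlt n m ->
     is_alg_hom pi -> (forall i a, inb i n -> pi (gn i a) = gm i a) ->
     forall (M : lmodType Am) (D : Am -> M),
       is_der (fun (x : Am) (v : M) => x *: v) D ->
       is_der (fun (x : An) (v : M) => pi x *: v) (D \o pi) /\
       forall a k, derPhi n gn (D \o pi) a k = jtrunc n (derPhi m gm D a) k).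
Proof.
split.
- move=> n An gamma HJ M act; split.
  + exact: part1a (proj1 HJ).
  + exact: part1b HJ.
  + exact: part1c HJ.
- move=> n m An Am gn gm pi _ _ hnm Hpi Hpg M D HD; split.
  + have := HD; case=> hZ hA hM; split.
    * by move=> r x /=; rewrite !(algZ Hpi) hZ; have := Hpi; case=> _ -> _.
    * by move=> x y /=; rewrite (algD Hpi) hA.
    * by move=> x y /=; rewrite (algM Hpi) hM.
  + move=> a k; rewrite /derPhi /jtrunc /=; case: ifP => // hk.
    by rewrite Hpg // (inb_lt hnm hk).
Qed.
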